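(* Consider the two-route traffic model described in the context, under the assumptions (A1)–(A5) listed there. Let $P:=\{x\in\Omega:\ 0\le x_1\le C_1,\ 0\le x_2\le C_2\}$. Then: (i) $P$ is positively invariant, i.e., every solution $x(t)$ of the system with $x(0)\in P$ satisfies $x(t)\in P$ for all $t\ge 0$; (ii) $P$ is globally attractive, i.e., for every open neighbourhood $U$ of $P$ and every initial condition $x_0\in\Omega$ there exists $\tau(x_0)>0$ such that the solution starting at $x_0$ lies in $U$ for all $t>\tau(x_0)$.
   Context: Two routes $i=1,2$ connect an origin to a destination. For each route there are positive parameters $B_i$ (jam density), $C_i$ (critical density), $F_i$ (maximum capacity) with $C_i<B_i$; the traffic demand is a constant $\phi>0$. Set $v_i=F_i/C_i$. The state is $x=(x_1,x_2)\in\Omega:=[0,B_1]\times[0,B_2]$ and evolves by $\dot x_i=\min\{\phi R_i(x),S_i(x_i)\}-D_i(x_i)$, $i=1,2$, where the supply is $S_i(x_i)=F_i$ if $x_i<C_i$ and $S_i(x_i)=\frac{F_i}{B_i-C_i}(B_i-x_i)$ otherwise, and the demand is $D_i(x_i)=v_ix_i$ if $x_i<C_i$ and $D_i(x_i)=F_i$ otherwise. The routing ratios are $R_i(x)=(1-\alpha)r_i^0+\alpha\, r_i(\tau(x))$, where $\alpha\in(0,1]$ (penetration rate), $r_1^0,r_2^0\ge 0$ are constants with $r_1^0+r_2^0=1$, $\tau(x)=(\tau_1(x_1),\tau_2(x_2))$ with each travel time $\tau_i$ a $C^1$ strictly increasing function, and the functions $r_i$ satisfy $0\le r_i(\tau(x))\le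 1$, $r_1(\tau(x))+r_2(\tau(x))=1$ for all $x\in\Omega$, and $x\mapsto r_i(\tau(x))$ is globally Lipschitz and $C^1$ on $\Omega$. Assumptions: (A1) $\phi<F_1+F_2$; (A2)–(A3) the properties of $\tau_i$, $r_i$ just listed; (A4) the routing ratios are strictly monotone: $\partial R_i/\partial \tau_j>0$ for $i\neq j$; (A5) $F_i>(1-\alpha)\phi r_i^0$ for $i=1,2$. *)

(* Defs.v *)
From Stdlib Require Import Reals.
From Coquelicot Require Import Coquelicot.
Open Scope R_scope.

Record model := Model {
  B1 : R; B2 : R;            (* jam densities *)
  C1 : R; C2 : R;            (* critical densities *)
  F1 : R; F2 : R;            (* maximum capacities *)
  phi : R;                   (* constant demand *)
  alpha : R;                 (* penetration rate *)
  r01 : R; r02 : R;          (* constant (uninformed) routing ratios *)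
  tau1 : R -> R; tau2 : R -> R;        (* travel times tau_i(x_i) *)
  r1 : R -> R -> R; r2 : R -> R -> R   (* r_i as functions of (tau_1, tau_2) *)
}.

(** Supply S_i and demand D_i (v_i = F_i / C_i). *)
Definition supply (F B C x : R) : R :=
  if Rlt_dec x C then F else F / (B - C) * (B - x).
Definition demand (F C x : R) : R :=
  if Rlt_dec x C then (F / C) * x else F.

Definition Rt1 (m : model) (t1 t2 : R) : R := (1 - alpha m) * r01 m + alpha m * r1 m t1 t2.
Definition Rt2 (m : model) (t1 t2 : R) : R := (1 - alpha m) * r02 m + alpha m * r2 m t1 t2.

Definition Rx1 (m : model) (x1 x2 : R) : R := Rt1 m (tau1 m x1) (tau2 m x2).
Definition Rx2 (m : model) (x1 x2 : R) : R := Rt2 m (tau1 m x1) (tau2 m x2).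

Definition field1 (m : model) (x1 x2 : R) : R :=
  Rmin (phi m * Rx1 m x1 x2) (supply (F1 m) (B1 m) (C1 m) x1) - demand (F1 m) (C1 m) x1.
Definition field2 (m : model) (x1 x2 : R) : R :=
  Rmin (phi m * Rx2 m x1 x2) (supply (F2 m) (B2 m) (C2 m) x2) - demand (F2 m) (C2 m) x2.

Definition inOmega (m : model) (x1 x2 : R) : Prop :=
  0 <= x1 <= B1 m /\ 0 <= x2 <= B2 m.
Definition inP (m : model) (x1 x2 : R) : Prop :=
  0 <= x1 <= C1 m /\ 0 <= x2 <= C2 m.

Definition C1_on_Omega (m : model) (g : R -> R -> R) : Prop :=
  exists d1 d2 : R -> R -> R,
    (forall y1 y2, inOmega m y1 y2 ->
       is_derive (fun s => g s y2) y1 (d1 y1 y2) /\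
       is_derive (fun s => g y1 s) y2 (d2 y1 y2)) /\
    (forall y1 y2, inOmega m y1 y2 -> forall eps : R, 0 < eps ->
       exists delta : R, 0 < delta /\ forall z1 z2, inOmega m z1 z2 ->
         Rabs (z1 - y1) < delta -> Rabs (z2 - y2) < delta ->
         Rabs (d1 z1 z2 - d1 y1 y2) < eps /\ Rabs (d2 z1 z2 - d2 y1 y2) < eps).

Definition Lipschitz_on_Omega (m : model) (g : R -> R -> R) : Prop :=
  exists L : R, forall x1 x2 y1 y2, inOmega m x1 x2 -> inOmega m y1 y2 ->
    Rabs (g x1 x2 - g y1 y2) <= L * (Rabs (x1 - y1) + Rabs (x2 - y2)).

Definition C1_strict_incr (f : R -> R) : Prop :=
  (exists df : R -> R, (forall y, is_derive f y (df y)) /\ (forall y, continuous df y)) /\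
  (forall a b, a < b -> f a < f b).

Definition assumptions (m : model) : Prop :=
  0 < B1 m /\ 0 < B2 m /\ 0 < C1 m /\ 0 < C2 m /\ 0 < F1 m /\ 0 < F2 m /\
  C1 m < B1 m /\ C2 m < B2 m /\ 0 < phi m /\
  0 < alpha m /\ alpha m <= 1 /\
  0 <= r01 m /\ 0 <= r02 m /\ r01 m + r02 m = 1 /\
  phi m < F1 m + F2 m /\
  C1_strict_incr (tau1 m) /\ C1_strict_incr (tau2 m) /\
  (forall x1 x2, inOmega m x1 x2 ->
     0 <= r1 m (tau1 m x1) (tau2 m x2) <= 1 /\
     0 <= r2 m (tau1 m x1) (tau2 m x2) <= 1 /\
     r1 m (tau1 m x1) (tau2 m x2) + r2 m (tau1 m x1) (tau2 m x2) = 1) /\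
  Lipschitz_on_Omega m (fun x1 x2 => r1 m (tau1 m x1) (tau2 m x2)) /\
  Lipschitz_on_Omega m (fun x1 x2 => r2 m (tau1 m x1) (tau2 m x2)) /\
  C1_on_Omega m (fun x1 x2 => r1 m (tau1 m x1) (tau2 m x2)) /\
  C1_on_Omega m (fun x1 x2 => r2 m (tau1 m x1) (tau2 m x2)) /\
  (forall x1 x2, inOmega m x1 x2 ->
     (exists d, is_derive (fun s => Rt1 m (tau1 m x1) s) (tau2 m x2) d /\ 0 < d) /\
     (exists d, is_derive (fun s => Rt2 m s (tau2 m x2)) (tau1 m x1) d /\ 0 < d)) /\
  F1 m > (1 - alpha m) * phi m * r01 m /\ F2 m > (1 - alpha m) * phi m * r02 m.

Definition is_solution (m : model) (x1 x2 : R -> R) : Prop :=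
  (forall t, 0 <= t -> inOmega m (x1 t) (x2 t)) /\
  (forall t, 0 < t ->
     is_derive x1 t (field1 m (x1 t) (x2 t)) /\
     is_derive x2 t (field2 m (x1 t) (x2 t))) /\
  filterlim x1 (at_right 0) (locally (x1 0)) /\
  filterlim x2 (at_right 0) (locally (x2 0)).

Definition open2 (U : R -> R -> Prop) : Prop :=
  forall p1 p2, U p1 p2 -> exists eps : R, 0 < eps /\
    forall q1 q2, Rabs (q1 - p1) < eps -> Rabs (q2 - p2) < eps -> U q1 q2.

(* Main.v *)
Require Import Defs.
From Stdlib Require Import Reals Lra Classical ClassicalEpsilon.
From Coquelicot Require Import Coquelicot.
Open Scope R_scope.

Lemma cont_nbhd (f : R -> R) m c : continuous f m -> c < f m ->
  exists eta, 0 < eta /\ forall y, Rabs (y - m) < eta -> c < f y.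
Proof.
  intros Hc Hlt. assert (He: 0 < f m - c) by lra.
  destruct (proj1 (filterlim_locally f (f m)) Hc (mkposreal _ He)) as [d Hd].
  exists d. split. apply cond_pos. intros y Hy.
  specialize (Hd y Hy).
  change (Rabs (f y - f m) < f m - c) in Hd.
  apply Rabs_def2 in Hd. lra.
Qed.

Lemma stay (f df : R -> R) (s t c : R) : 0 < s -> s <= t ->
  (forall u, 0 < u -> is_derive f u (df u)) ->
  (forall u, 0 < u -> c < f u -> df u < 0) -> f s <= c -> f t <= c.
Proof.
  intros Hs Hst Hd Hneg Hfs.
  destruct (Rle_lt_dec (f t) c) as [|Hft]; [assumption|exfalso].
  assert (Hcont: forall u, 0 < u -> continuous f u).
  { intros u Hu; apply (@ex_derive_continuous R_AbsRing R_NormedModule); eexists; apply Hd; exact Hu. }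
  destruct (continuous_ab_maj_consistent f s t Hst) as [M [HM1 HM2]].
  { intros; apply Hcont; lra. }
  assert (HfM: c < f M) by (specialize (HM1 t); lra).
  assert (HsM: s < M).
  { destruct (Rle_lt_dec M s); [|lra]. assert (M = s) by lra. subst. lra. }
  destruct (cont_nbhd f M c (Hcont M ltac:(lra)) HfM) as [eta [Heta Hn]].
  set (h := Rmin (eta/2) ((M - s)/2)).
  assert (Hh1 : h <= eta/2) by apply Rmin_l.
  assert (Hh2 : h <= (M - s)/2) by apply Rmin_r.
  assert (Hh0 : 0 < h) by (apply Rmin_glb_lt; lra).
  destruct (MVT_gen f (M - h) M df) as [xi [Hxi Heq]].
  - intros x Hx. rewrite Rmin_left in Hx by lra. rewrite Rmax_right in Hx by lra.
    apply Hd. lra.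
  - intros x Hx. rewrite Rmin_left in Hx by lra. rewrite Rmax_right in Hx by lra.
    apply continuity_pt_filterlim. apply Hcont. lra.
  - rewrite Rmin_left in Hxi by lra. rewrite Rmax_right in Hxi by lra.
    assert (Hdxi : df xi < 0).
    { apply Hneg. lra. apply Hn. apply Rabs_def1; lra. }
    assert (f (M - h) <= f M) by (apply HM1; lra).
    assert (df xi * (M - (M - h)) < 0).
    { replace (M - (M - h)) with h by ring. nra. }
    lra.
Qed.

Lemma reach (f df : R -> R) (c a Bd : R) : 0 < a ->
  (forall u, 0 < u -> is_derive f u (df u)) ->
  (forall u, 0 < u -> 0 <= f u <= Bd) ->
  (forall u, 0 < u -> c <= f u -> df u <= -a) ->
  exists T, 0 < T /\ forall t, T <= t -> f t <= c.
Proof.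
  intros Ha Hd Hb Hneg.
  assert (HB0 : 0 <= Bd) by (specialize (Hb 1 Rlt_0_1); lra).
  set (L := Bd / a + 1).
  assert (HL : a * L = Bd + a) by (unfold L; field; lra).
  assert (HL0 : 0 < L).
  { unfold L. assert (0 <= Bd / a) by (apply Rdiv_le_0_compat; lra). lra. }
  destruct (classic (exists s, 1 <= s <= 1 + L /\ f s < c)) as [[s [Hs Hfs]]|Hno].
  - exists s. split. lra. intros t Ht.
    apply (stay f df s t c); try lra; auto.
    intros u Hu Hc. specialize (Hneg u Hu ltac:(lra)). lra.
  - exfalso.
    assert (Hall : forall s, 1 <= s <= 1 + L -> c <= f s).
    { intros s Hs. destruct (Rle_lt_dec c (f s)); auto. exfalso; apply Hno; eauto. }
    assert (Hcont: forall u, 0 < u -> continuous f u).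
    { intros u Hu; apply (@ex_derive_continuous R_AbsRing R_NormedModule); eexists; apply Hd; exact Hu. }
    destruct (MVT_gen f 1 (1 + L) df) as [xi [Hxi Heq]].
    + intros x Hx. rewrite Rmin_left in Hx by lra. rewrite Rmax_right in Hx by lra.
      apply Hd. lra.
    + intros x Hx. rewrite Rmin_left in Hx by lra. rewrite Rmax_right in Hx by lra.
      apply continuity_pt_filterlim. apply Hcont. lra.
    + rewrite Rmin_left in Hxi by lra. rewrite Rmax_right in Hxi by lra.
      assert (Hdxi : df xi <= - a) by (apply Hneg; [lra| apply Hall; lra]).
      replace (1 + L - 1) with L in Heq by ring.
      assert (df xi * L <= - a * L) by nra.
      pose proof (Hb 1 Rlt_0_1). pose proof (Hb (1 + L) ltac:(lra)). nra.
Qed.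

Lemma inv_gen (f df : R -> R) c :
  (forall u, 0 < u -> is_derive f u (df u)) ->
  (forall u, 0 < u -> c < f u -> df u < 0) ->
  filterlim f (at_right 0) (locally (f 0)) -> f 0 <= c ->
  forall t, 0 <= t -> f t <= c.
Proof.
  intros Hd Hneg Hr H0 t Ht.
  destruct (Req_dec t 0) as [->|Ht0]; [assumption|].
  destruct (Rle_lt_dec (f t) c) as [|Hft]; [assumption|exfalso].
  set (c' := (c + f t) / 2).
  assert (He : 0 < c' - f 0) by (unfold c'; lra).
  destruct (proj1 (filterlim_locally f (f 0)) Hr (mkposreal _ He)) as [d Hdd].
  set (s := Rmin (d/2) (t/2)).
  assert (Hs1 : s <= d/2) by apply Rmin_l.
  assert (Hs2 : s <= t/2) by apply Rmin_r.
  assert (Hs0 : 0 < s) by (apply Rmin_glb_lt; pose proof (cond_pos d); lra).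
  assert (Hb : Rabs (f s - f 0) < c' - f 0).
  { apply (Hdd s). change (Rabs (s - 0) < d). rewrite Rminus_0_r, Rabs_pos_eq by lra.
    pose proof (cond_pos d); lra. exact Hs0. }
  apply Rabs_def2 in Hb.
  assert (f t <= c').
  { apply (stay f df s t c'); try lra; auto.
    intros u Hu Hc. apply Hneg; auto. unfold c' in *; lra. }
  unfold c' in *; lra.
Qed.

Lemma field1_bound m : assumptions m -> forall y1 y2, Defs.C1 m <= y1 ->
  field1 m y1 y2 <= -(Defs.F1 m / (Defs.B1 m - Defs.C1 m)) * (y1 - Defs.C1 m).
Proof.
  intros Hm y1 y2 Hy.
  destruct Hm as (HB1 & HB2 & HC1 & HC2 & HF1 & HF2 & HCB1 & HCB2 & _).
  unfold field1, supply, demand. destruct (Rlt_dec y1 (Defs.C1 m)); [lra|].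
  pose proof (Rmin_r (phi m * Rx1 m y1 y2) (Defs.F1 m / (Defs.B1 m - Defs.C1 m) * (Defs.B1 m - y1))).
  assert (Defs.F1 m / (Defs.B1 m - Defs.C1 m) * (Defs.B1 m - y1) - Defs.F1 m
          = -(Defs.F1 m / (Defs.B1 m - Defs.C1 m)) * (y1 - Defs.C1 m)) by (field; lra).
  lra.
Qed.

Lemma field2_bound m : assumptions m -> forall y1 y2, Defs.C2 m <= y2 ->
  field2 m y1 y2 <= -(Defs.F2 m / (Defs.B2 m - Defs.C2 m)) * (y2 - Defs.C2 m).
Proof.
  intros Hm y1 y2 Hy.
  destruct Hm as (HB1 & HB2 & HC1 & HC2 & HF1 & HF2 & HCB1 & HCB2 & _).
  unfold field2, supply, demand. destruct (Rlt_dec y2 (Defs.C2 m)); [lra|].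
  pose proof (Rmin_r (phi m * Rx2 m y1 y2) (Defs.F2 m / (Defs.B2 m - Defs.C2 m) * (Defs.B2 m - y2))).
  assert (Defs.F2 m / (Defs.B2 m - Defs.C2 m) * (Defs.B2 m - y2) - Defs.F2 m
          = -(Defs.F2 m / (Defs.B2 m - Defs.C2 m)) * (y2 - Defs.C2 m)) by (field; lra).
  lra.
Qed.

Theorem lemma1 (m : model) (Hm : assumptions m) :
  (* (i) P is positively invariant *)
  (forall x1 x2 : R -> R, is_solution m x1 x2 -> inP m (x1 0) (x2 0) ->
     forall t, 0 <= t -> inP m (x1 t) (x2 t)) /\
  (* (ii) P is globally attractive *)
  (forall U : R -> R -> Prop, open2 U -> (forall y1 y2, inP m y1 y2 -> U y1 y2) ->
   forall x1 x2 : R -> R, is_solution m x1 x2 -> inOmega m (x1 0) (x2 0) ->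
     exists T : R, 0 < T /\ forall t, T < t -> U (x1 t) (x2 t)).
Proof.
  pose proof (field1_bound m Hm) as Hf1.
  pose proof (field2_bound m Hm) as Hf2.
  assert (Hk1 : 0 < Defs.F1 m / (Defs.B1 m - Defs.C1 m)).
  { destruct Hm as (HB1 & HB2 & HC1 & HC2 & HF1 & HF2 & HCB1 & HCB2 & _).
    apply Rdiv_lt_0_compat; lra. }
  assert (Hk2 : 0 < Defs.F2 m / (Defs.B2 m - Defs.C2 m)).
  { destruct Hm as (HB1 & HB2 & HC1 & HC2 & HF1 & HF2 & HCB1 & HCB2 & _).
    apply Rdiv_lt_0_compat; lra. }
  split.
  - intros x1 x2 Hsol HP t Ht. destruct Hsol as (HO & HD & Hr1 & Hr2).
    destruct HP as [HP1 HP2]. destruct (HO t Ht) as [HO1 HO2].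
    split; split; try lra.
    + apply (inv_gen x1 (fun u => field1 m (x1 u) (x2 u)) (Defs.C1 m)); auto; try lra.
      * intros u Hu; apply (HD u Hu).
      * intros u Hu Hc. specialize (Hf1 (x1 u) (x2 u) ltac:(lra)). nra.
    + apply (inv_gen x2 (fun u => field2 m (x1 u) (x2 u)) (Defs.C2 m)); auto; try lra.
      * intros u Hu; apply (HD u Hu).
      * intros u Hu Hc. specialize (Hf2 (x1 u) (x2 u) ltac:(lra)). nra.
  - intros U HU HPU x1 x2 Hsol HO0.
    destruct Hsol as (HO & HD & Hr1 & Hr2).
    assert (Hch : forall u v, exists e : posreal, inP m u v ->
      forall q1 q2, Rabs (q1 - u) < 2 * e -> Rabs (q2 - v) < 2 * e -> U q1 q2).
    { intros u v. destruct (classic (inP m u v)) as [Hin|Hnin].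
      - destruct (HU u v (HPU u v Hin)) as [e [He H]].
        assert (He2 : 0 < e / 2) by lra.
        exists (mkposreal _ He2). intros _ q1 q2 H1 H2. simpl in H1, H2.
        apply H; lra.
      - exists (mkposreal 1 Rlt_0_1). intros Hin; contradiction. }
    set (delta := fun u v => proj1_sig (constructive_indefinite_description _ (Hch u v))).
    assert (Hdel : forall u v, inP m u v ->
      forall q1 q2, Rabs (q1 - u) < 2 * delta u v -> Rabs (q2 - v) < 2 * delta u v -> U q1 q2).
    { intros u v. unfold delta. exact (proj2_sig (constructive_indefinite_description _ (Hch u v))). }
    destruct (compactness_value_2d 0 (Defs.C1 m) 0 (Defs.C2 m) delta) as [d Hd].
    pose proof (cond_pos d) as Hd0.
    set (dl := d / 2). assert (Hdl0 : 0 < dl) by (unfold dl; lra).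
    destruct (reach x1 (fun u => field1 m (x1 u) (x2 u)) (Defs.C1 m + dl)
                (Defs.F1 m / (Defs.B1 m - Defs.C1 m) * dl) (Defs.B1 m)) as [T1 [HT1 HT1']].
    { unfold dl; nra. }
    { intros u Hu; apply (HD u Hu). }
    { intros u Hu; destruct (HO u ltac:(lra)) as [H1 _]; lra. }
    { intros u Hu Hc. specialize (Hf1 (x1 u) (x2 u) ltac:(unfold dl in *; lra)).
      unfold dl in *. nra. }
    destruct (reach x2 (fun u => field2 m (x1 u) (x2 u)) (Defs.C2 m + dl)
                (Defs.F2 m / (Defs.B2 m - Defs.C2 m) * dl) (Defs.B2 m)) as [T2 [HT2 HT2']].
    { unfold dl; nra. }
    { intros u Hu; apply (HD u Hu). }
    { intros u Hu; destruct (HO u ltac:(lra)) as [_ H2]; lra. }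
    { intros u Hu Hc. specialize (Hf2 (x1 u) (x2 u) ltac:(unfold dl in *; lra)).
      unfold dl in *. nra. }
    exists (Rmax T1 T2). split.
    { pose proof (Rmax_l T1 T2); lra. }
    intros t Ht.
    pose proof (Rmax_l T1 T2). pose proof (Rmax_r T1 T2).
    assert (Hx1 : x1 t <= Defs.C1 m + dl) by (apply HT1'; lra).
    assert (Hx2 : x2 t <= Defs.C2 m + dl) by (apply HT2'; lra).
    destruct (HO t ltac:(lra)) as [[Ha1 Hb1] [Ha2 Hb2]].
    assert (HC1 : 0 < Defs.C1 m) by (destruct Hm as (_ & _ & Hq & _); exact Hq).
    assert (HC2 : 0 < Defs.C2 m) by (destruct Hm as (_ & _ & _ & Hq & _); exact Hq).
    set (p1 := Rmin (x1 t) (Defs.C1 m)). set (p2 := Rmin (x2 t) (Defs.C2 m)).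
    assert (Hp1 : 0 <= p1 <= Defs.C1 m /\ 0 <= x1 t - p1 <= dl).
    { unfold p1, Rmin. destruct (Rle_dec (x1 t) (Defs.C1 m)); lra. }
    assert (Hp2 : 0 <= p2 <= Defs.C2 m /\ 0 <= x2 t - p2 <= dl).
    { unfold p2, Rmin. destruct (Rle_dec (x2 t) (Defs.C2 m)); lra. }
    apply NNPP. intro HnU.
    apply (Hd p1 p2 (proj1 Hp1) (proj1 Hp2)).
    intros [u [v (Hu & Hv & H1 & H2 & Hdl)]]. apply HnU.
    apply Rabs_def2 in H1. apply Rabs_def2 in H2.
    apply (Hdel u v (conj Hu Hv)); apply Rabs_def1; unfold dl in *; lra.
Qed.
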